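(* Consider the 2D pure diffusion equation $u_t = d_{11} u_{x_1x_1} + d_{22} u_{x_2x_2} + (d_{12}+d_{21}) u_{x_1x_2}$ on the unit square $[0,1]^2$ with periodic boundary condition, where $D=(d_{ij})\in\mathbb R^{2\times2}$ is positive semi-definite and $|d_{12}+d_{21}|\le 2\gamma\sqrt{d_{11}d_{22}}$ with $\gamma\in[0,1]$. Let the semi-discrete system $u'=F_0(u)+F_1(u)+F_2(u)$ ($s=2$) be obtained by central second-order finite difference discretization on a uniform Cartesian grid with mesh-width $h$ in both directions, with $F_0$ the mixed-derivative part and $F_j$ the second-derivative part in the $x_j$-direction ($j=1,2$). Consider the two-step ($k=2$) modified stabilizing correction method $$v_0=\sum_{i=1}^2\Big(a_iu_{n-i}+\Delta t\,\hat b_iF_0(u_{n-i})+\Delta t\,\check b_i\sum_{j=1}^2F_j(u_{n-i})\Big),$$ $$v_j=v_{j-1}+\Delta t\sum_{i=1}^2(b_i-\check b_i)F_j(u_{n-i})+\Delta t\,\theta F_j(v_j)\ (j=1,2),\qquad u_n=v_2,$$ with coefficients given by one of: (CNLF) $a=(0,1)$, $b=(0,1)$, $\hat b=(2,0)$, $\check b=(1,1)$, $\theta=1$; (BDF2-type) $a=(\tfrac43,-\tfrac13)$, $b=(\tfrac43-2\theta,-\tfrac23+\theta)$, $\hat b=(\tfrac43,-\tfrac23)$, $\check b=(\tfrac43-\theta,-\tfrac23+\theta)$; (Adams2-type) $a=(1,0)$, $b=(\tfrac32-2\theta,-\tfrac12+\theta)$, $\hat b=(\tfrac32,-\tfrac12)$,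 $\check b=(\tfrac32-\theta,-\tfrac12+\theta)$. Then these three methods are unconditionally stable (in the discrete $L_2$-norm, for all $r=\Delta t/h^2>0$) for the following parameter values $\theta$: CNLF: $\theta = 1$; BDF2-type: $\theta \geq\max\left\{\frac{1}{2}, \frac{\gamma+1}{2+2/\sqrt{3}} \right\}$; Adams2-type: $\theta \geq\max\left\{\frac{1}{2}, \frac{\gamma+1}{3} \right\}$.
   Context: Stability is understood via von Neumann analysis: the matrices are normal and commuting with scaled eigenvalues $z_j=-2rd_{jj}(1-\cos\phi_j)$ ($j=1,2$), $z_0=-r(d_{12}+d_{21})\sin\phi_1\sin\phi_2$, $r=\Delta t/h^2$, $\phi_j\in[0,2\pi]$, and stability means that the characteristic polynomial $\zeta^2-r_1\zeta-r_2$ satisfies the root condition (all roots of modulus $\le1$, those of modulus one simple), where $r_i=\frac1p\big(a_i+\hat b_iz_0+\check b_i(z_1+z_2)+\frac1\theta(b_i-\check b_i)(1-p)\big)$, $p=(1-\theta z_1)(1-\theta z_2)$. Here $\theta=b_0$. *)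

(* Defs.v *)
From Stdlib Require Import Reals.
From Coquelicot Require Import Coquelicot.
Open Scope R_scope.

(* Scaled eigenvalues of the (normal, commuting) difference matrices. *)
Definition zj (r djj phi : R) : R := -2 * r * djj * (1 - cos phi).
Definition z0 (r d12 d21 phi1 phi2 : R) : R := - r * (d12 + d21) * sin phi1 * sin phi2.

Definition pfac (theta z1 z2 : R) : R := (1 - theta * z1) * (1 - theta * z2).
Definition rcoef (ai bi bhi bci theta z0v z1 z2 : R) : R :=
  / pfac theta z1 z2 *
  (ai + bhi * z0v + bci * (z1 + z2) + / theta * (bi - bci) * (1 - pfac theta z1 z2)).

Definition root_condition (r1 r2 : R) : Prop :=
  forall zeta : C,
    Cminus (Cminus (Cmult zeta zeta) (Cmult (RtoC r1) zeta)) (RtoC r2) = RtoC 0 ->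
    Cmod zeta <= 1 /\
    (Cmod zeta = 1 -> Cminus (Cmult (RtoC 2) zeta) (RtoC r1) <> RtoC 0).

(* Unconditional (von Neumann) stability of the two-step modified stabilizing
   correction method with coefficients a, b, bhat (bh), bcheck (bc), theta,
   applied to the 2D diffusion problem with D = (d_ij): for all r = dt/h^2 > 0
   and all phi1, phi2 in [0, 2 pi] the root condition holds. *)
Definition uncond_stable (a1 a2 b1 b2 bh1 bh2 bc1 bc2 theta : R)
    (d11 d12 d21 d22 : R) : Prop :=
  forall r phi1 phi2 : R,
    0 < r -> 0 <= phi1 <= 2 * PI -> 0 <= phi2 <= 2 * PI ->
    let z1 := zj r d11 phi1 in
    let z2 := zj r d22 phi2 in
    let z0v := z0 r d12 d21 phi1 phi2 in
    root_condition (rcoef a1 b1 bh1 bc1 theta z0v z1 z2)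
                   (rcoef a2 b2 bh2 bc2 theta z0v z1 z2).

Definition psd2 (d11 d12 d21 d22 : R) : Prop :=
  forall x y : R, 0 <= x * (d11 * x + d12 * y) + y * (d21 * x + d22 * y).

(* Main.v *)
Require Import Defs.
From Stdlib Require Import Reals Lra Psatz.
From Coquelicot Require Import Coquelicot.
Open Scope R_scope.

Lemma root_lemma (r1 r2 : R) :
  -1 < r2 -> r2 <= 1 -> r1 + r2 <= 1 -> r2 - r1 <= 1 -> root_condition r1 r2.
Proof.
  intros H1 H2 H3 H4 [a b] Heq.
  unfold Cminus, Cmult, Cplus, Copp, RtoC in Heq; simpl in Heq.
  injection Heq; intros Him Hre.
  unfold Cmod; simpl.
  destruct (Req_dec b 0) as [Hb|Hb].
  - subst b.
    assert (Hr : a*a - r1*a - r2 = 0) by lra.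
    assert (Ha : a*a <= 1).
    { destruct (Rle_dec (a*a) 1) as [h|h]; [exact h|].
      exfalso.
      set (a' := r1 - a).
      assert (Hp : a * a' = - r2) by (unfold a'; lra).
      assert (F1 : (1 - a) * (1 - a') >= 0) by (unfold a'; nra).
      assert (F2 : (1 + a) * (1 + a') >= 0) by (unfold a'; nra).
      destruct (Rle_dec a 0).
      - assert (a < -1) by nra. assert (a' <= -1) by nra. nra.
      - assert (a > 1) by nra. assert (a' >= 1) by nra. nra. }
    assert (E : a ^ 2 + 0 ^ 2 = a * a) by ring.
    match goal with |- context [sqrt ?X] => replace X with (a*a) by ring end.
    split.
    + rewrite <- sqrt_1. apply sqrt_le_1_alt. exact Ha.
    + intros Hm Hc. injection Hc; intros _ Hc'.
      assert (a*a = 1).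
      { assert (0 <= a*a) by nra.
        rewrite <- (sqrt_sqrt (a*a)) by lra. rewrite Hm. ring. }
      assert (r1 = 2*a) by lra. subst r1. nra.
  - assert (Hr1 : r1 = 2*a).
    { apply (Rmult_eq_reg_r b); [|exact Hb]. lra. }
    subst r1.
    assert (Hm : a^2 + b^2 = - r2) by nra.
    match goal with |- context [sqrt ?X] => replace X with (-r2) by lra end.
    assert (sqrt (- r2) < 1).
    { rewrite <- sqrt_1. apply sqrt_lt_1_alt. nra. }
    split; intros; lra.
Qed.

Lemma root_lemma_p (p N1 N2 : R) :
  0 < p -> -p < N2 -> N2 <= p -> N1 + N2 <= p -> N2 - N1 <= p ->
  root_condition (/ p * N1) (/ p * N2).
Proof.
  intros Hp H1 H2 H3 H4.
  assert (Hi : 0 < / p) by (apply Rinv_0_lt_compat; lra).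
  assert (Ei : / p * p = 1) by (field; lra).
  apply root_lemma; nra.
Qed.

Lemma symb_facts d11 d12 d21 d22 gamma r phi1 phi2 :
  psd2 d11 d12 d21 d22 -> 0 <= gamma <= 1 ->
  Rabs (d12 + d21) <= 2 * gamma * sqrt (d11 * d22) -> 0 < r ->
  let z1 := zj r d11 phi1 in let z2 := zj r d22 phi2 in
  let w := z0 r d12 d21 phi1 phi2 in
  z1 <= 0 /\ z2 <= 0 /\ w * w <= 4 * gamma^2 * (z1 * z2).
Proof.
  intros Hpsd Hg Hd Hr z1 z2 w.
  assert (H11 : 0 <= d11) by (generalize (Hpsd 1 0); lra).
  assert (H22 : 0 <= d22) by (generalize (Hpsd 0 1); lra).
  assert (Hc1 := COS_bound phi1). assert (Hc2 := COS_bound phi2).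
  assert (Hs1 := sin2_cos2 phi1). assert (Hs2 := sin2_cos2 phi2).
  unfold Rsqr in *.
  assert (Hz1 : z1 <= 0).
  { unfold z1, zj. assert (0 <= r*d11) by nra.
    assert (0 <= (r*d11)*(1 - cos phi1)) by (apply Rmult_le_pos; lra). nra. }
  assert (Hz2 : z2 <= 0).
  { unfold z2, zj. assert (0 <= r*d22) by nra.
    assert (0 <= (r*d22)*(1 - cos phi2)) by (apply Rmult_le_pos; lra). nra. }
  split; [exact Hz1|]. split; [exact Hz2|].
  set (e := d12 + d21).
  assert (Hdd : 0 <= d11 * d22) by nra.
  assert (He : e * e <= 4 * gamma^2 * (d11 * d22)).
  { assert (Hsq := sqrt_sqrt _ Hdd).
    assert (0 <= sqrt (d11*d22)) by apply sqrt_pos.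
    assert (Habs : e * e = Rabs e * Rabs e).
    { unfold Rabs; destruct (Rcase_abs e); ring. }
    assert (0 <= Rabs e) by apply Rabs_pos.
    rewrite Habs.
    assert (Q : Rabs e * Rabs e <= (2 * gamma * sqrt (d11 * d22)) * (2 * gamma * sqrt (d11 * d22)))
      by (apply Rmult_le_compat; [exact H0|exact H0|exact Hd|exact Hd]).
    replace (4 * gamma ^ 2 * (d11 * d22)) with ((2 * gamma * sqrt (d11 * d22)) * (2 * gamma * sqrt (d11 * d22))).
    exact Q.
    transitivity (4*gamma^2*(sqrt(d11*d22)*sqrt(d11*d22))); [ring | rewrite Hsq; ring]. }
  set (c1 := cos phi1) in *. set (c2 := cos phi2) in *.
  set (s1 := sin phi1) in *. set (s2 := sin phi2) in *.
  assert (S1 : s1 * s1 <= 2 * (1 - c1)) by nra.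
  assert (S2 : s2 * s2 <= 2 * (1 - c2)) by nra.
  assert (Ew : w * w = r*r * (e*e) * (s1*s1) * (s2*s2)) by (unfold w, z0, e, s1, s2; ring).
  assert (Ez : z1 * z2 = 4 * r * r * (d11 * d22) * (1 - c1) * (1 - c2)) by (unfold z1, z2, zj, c1, c2; ring).
  rewrite Ew, Ez.
  assert (A1 : 0 <= s1*s1) by nra. assert (A2 : 0 <= s2*s2) by nra.
  assert (B : (e*e) * (s1*s1) * (s2*s2) <= 4 * gamma^2 * (d11*d22) * (2*(1-c1)) * (2*(1-c2))).
  { apply Rle_trans with (4 * gamma^2 * (d11*d22) * (s1*s1) * (s2*s2)).
    - apply Rmult_le_compat_r; [lra|]. apply Rmult_le_compat_r; lra.
    - assert (0 <= 4 * gamma^2 * (d11*d22)) by nra.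
      apply Rmult_le_compat; nra. }
  nra.
Qed.

Lemma s_facts z1 z2 w gamma :
  z1 <= 0 -> z2 <= 0 -> 0 <= gamma -> w * w <= 4 * gamma^2 * (z1 * z2) ->
  exists s, 0 <= s /\ s * s = z1 * z2 /\ 2 * s <= -(z1 + z2) /\
            - (2 * gamma * s) <= w /\ w <= 2 * gamma * s.
Proof.
  intros H1 H2 Hg Hw.
  assert (Hp : 0 <= z1 * z2) by nra.
  exists (sqrt (z1 * z2)).
  assert (Hs := sqrt_pos (z1*z2)). assert (Hsq := sqrt_sqrt _ Hp).
  set (s := sqrt (z1*z2)) in *.
  split; [exact Hs|]. split; [exact Hsq|].
  split.
  - assert ((z1 + z2) * (z1 + z2) - 4 * (s*s) = (z1 - z2)*(z1-z2)) by (rewrite Hsq; ring).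
    destruct (Rle_dec (2*s) (-(z1+z2))) as [h|h]; [exact h|].
    assert (0 < (2*s - -(z1+z2)) * (2*s + -(z1+z2))) by (apply Rmult_lt_0_compat; lra).
    assert (0 <= (z1 - z2)*(z1-z2)) by apply Rle_0_sqr.
    lra.
  - assert (w * w <= (2*gamma*s)*(2*gamma*s)) by (rewrite <- Hsq in Hw; replace ((2*gamma*s)*(2*gamma*s)) with (4*gamma^2*(s*s)) by ring; exact Hw).
    assert (0 <= 2*gamma*s) by (apply Rmult_le_pos; lra).
    set (t := 2*gamma*s) in *.
    split.
    + destruct (Rle_dec (-t) w) as [h|h]; [exact h|].
      assert (0 < (-t - w) * (t - w)) by (apply Rmult_lt_0_compat; lra). nra.
    + destruct (Rle_dec w t) as [h|h]; [exact h|].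
      assert (0 < (w - t) * (w + t)) by (apply Rmult_lt_0_compat; lra). nra.
Qed.

Lemma cnlf_ok z1 z2 w gamma :
  z1 <= 0 -> z2 <= 0 -> 0 <= gamma <= 1 -> w * w <= 4 * gamma^2 * (z1 * z2) ->
  root_condition (rcoef 0 0 2 1 1 w z1 z2) (rcoef 1 1 0 1 1 w z1 z2).
Proof.
  intros H1 H2 Hg Hw.
  destruct (s_facts z1 z2 w gamma H1 H2 (proj1 Hg) Hw) as [s [Hs [Hss [Hx [Hwl Hwu]]]]].
  unfold rcoef.
  assert (Ep : pfac 1 z1 z2 = 1 - (z1 + z2) + s * s) by (unfold pfac; rewrite Hss; ring).
  assert (E1 : 0 + 2 * w + 1 * (z1 + z2) + / 1 * (0 - 1) * (1 - pfac 1 z1 z2) = 2 * w + s * s)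
    by (rewrite Ep; field).
  assert (E2 : 1 + 0 * w + 1 * (z1 + z2) + / 1 * (1 - 1) * (1 - pfac 1 z1 z2) = 1 + (z1 + z2))
    by (rewrite Ep; field).
  rewrite E1, E2, Ep.
  assert (0 <= s * s) by nra.
  assert (gamma * s <= s) by nra.
  apply root_lemma_p; lra.
Qed.

Lemma bdf_ok z1 z2 w gamma theta :
  z1 <= 0 -> z2 <= 0 -> 0 <= gamma <= 1 -> w * w <= 4 * gamma^2 * (z1 * z2) ->
  1/2 <= theta -> 1 + gamma <= theta * (2 + 2 * sqrt 3 / 3) ->
  root_condition (rcoef (4/3) (4/3 - 2 * theta) (4/3) (4/3 - theta) theta w z1 z2)
                 (rcoef (-(1/3)) (-(2/3) + theta) (-(2/3)) (-(2/3) + theta) theta w z1 z2).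
Proof.
  intros H1 H2 Hg Hw Ht Htg.
  destruct (s_facts z1 z2 w gamma H1 H2 (proj1 Hg) Hw) as [s [Hs [Hss [Hx [Hwl Hwu]]]]].
  unfold rcoef.
  set (x := z1 + z2) in *.
  assert (Ep : pfac theta z1 z2 = 1 - theta * x + theta^2 * (s * s))
    by (unfold pfac, x; rewrite Hss; ring).
  assert (E1 : 4/3 + 4/3 * w + (4/3 - theta) * x + / theta * (4/3 - 2 * theta - (4/3 - theta)) * (1 - pfac theta z1 z2)
     = 4/3 + 4/3 * w + (4/3 - 2*theta) * x + theta^2 * (s*s))
    by (rewrite Ep; field; lra).
  assert (E2 : -(1/3) + -(2/3) * w + (-(2/3) + theta) * x + / theta * (-(2/3) + theta - (-(2/3) + theta)) * (1 - pfac theta z1 z2)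
     = -(1/3) - 2/3 * w + (-(2/3) + theta) * x)
    by (rewrite Ep; field; lra).
  rewrite E1, E2, Ep.
  set (q := sqrt 3) in *.
  assert (Hq : q * q = 3) by (apply sqrt_sqrt; lra).
  assert (Hq0 : 0 <= q) by apply sqrt_pos.
  assert (F0 : 0 <= theta^2 * (s * s)) by nra.
  assert (F1 : gamma * s <= s) by nra.
  assert (F2 : 0 <= (2*theta - 2/3) * (-x - 2*s)) by (apply Rmult_le_pos; lra).
  assert (F3 : 0 <= (theta * s - 1) * (theta * s - 1)) by apply Rle_0_sqr.
  assert (F4 : 0 <= (theta * s * q - 2) * (theta * s * q - 2)) by apply Rle_0_sqr.
  assert (F4' : (theta * s * q) * (theta * s * q) = 3 * (theta^2 * (s*s)))
    by (transitivity (theta^2 * (s*s) * (q*q)); [ring| rewrite Hq; ring]).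
  assert (F5 : 0 <= s * (theta * (2 + 2 * q / 3) - 1 - gamma)) by (apply Rmult_le_pos; lra).
  assert (F6 : s / 2 <= theta * s) by nra.
  apply root_lemma_p; nra.
Qed.

Lemma adams_ok z1 z2 w gamma theta :
  z1 <= 0 -> z2 <= 0 -> 0 <= gamma <= 1 -> w * w <= 4 * gamma^2 * (z1 * z2) ->
  1/2 <= theta -> 1 + gamma <= 3 * theta ->
  root_condition (rcoef 1 (3/2 - 2 * theta) (3/2) (3/2 - theta) theta w z1 z2)
                 (rcoef 0 (-(1/2) + theta) (-(1/2)) (-(1/2) + theta) theta w z1 z2).
Proof.
  intros H1 H2 Hg Hw Ht Htg.
  destruct (s_facts z1 z2 w gamma H1 H2 (proj1 Hg) Hw) as [s [Hs [Hss [Hx [Hwl Hwu]]]]].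
  unfold rcoef.
  set (x := z1 + z2) in *.
  assert (Ep : pfac theta z1 z2 = 1 - theta * x + theta^2 * (s * s))
    by (unfold pfac, x; rewrite Hss; ring).
  assert (E1 : 1 + 3/2 * w + (3/2 - theta) * x + / theta * (3/2 - 2 * theta - (3/2 - theta)) * (1 - pfac theta z1 z2)
     = 1 + 3/2 * w + (3/2 - 2*theta) * x + theta^2 * (s*s))
    by (rewrite Ep; field; lra).
  assert (E2 : 0 + -(1/2) * w + (-(1/2) + theta) * x + / theta * (-(1/2) + theta - (-(1/2) + theta)) * (1 - pfac theta z1 z2)
     = - (1/2) * w + (-(1/2) + theta) * x)
    by (rewrite Ep; field; lra).
  rewrite E1, E2, Ep.
  assert (F0 : 0 <= theta^2 * (s * s)) by nra.
  assert (F1 : gamma * s <= s) by nra.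
  assert (F2 : 0 <= (2*theta - 1/2) * (-x - 2*s)) by (apply Rmult_le_pos; lra).
  assert (F3 : 0 <= (theta * s - 1) * (theta * s - 1)) by apply Rle_0_sqr.
  assert (F5 : 0 <= s * (3 * theta - 1 - gamma)) by (apply Rmult_le_pos; lra).
  assert (F6 : s / 2 <= theta * s) by nra.
  apply root_lemma_p; nra.
Qed.

Theorem theorem2 :
  forall d11 d12 d21 d22 gamma : R,
    psd2 d11 d12 d21 d22 ->
    0 <= gamma <= 1 ->
    Rabs (d12 + d21) <= 2 * gamma * sqrt (d11 * d22) ->
    (* CNLF, theta = 1 *)
    uncond_stable 0 1 0 1 2 0 1 1 1 d11 d12 d21 d22 /\
    (* BDF2-type *)
    (forall theta : R,
       Rmax (1/2) ((gamma + 1) / (2 + 2 / sqrt 3)) <= theta ->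
       uncond_stable (4/3) (-(1/3)) (4/3 - 2 * theta) (-(2/3) + theta)
                     (4/3) (-(2/3)) (4/3 - theta) (-(2/3) + theta) theta
                     d11 d12 d21 d22) /\
    (* Adams2-type *)
    (forall theta : R,
       Rmax (1/2) ((gamma + 1) / 3) <= theta ->
       uncond_stable 1 0 (3/2 - 2 * theta) (-(1/2) + theta)
                     (3/2) (-(1/2)) (3/2 - theta) (-(1/2) + theta) theta
                     d11 d12 d21 d22).
Proof.
  intros d11 d12 d21 d22 gamma Hpsd Hg Hd.
  split; [|split].
  - intros r phi1 phi2 Hr _ _. cbv zeta.
    destruct (symb_facts d11 d12 d21 d22 gamma r phi1 phi2 Hpsd Hg Hd Hr) as [A [B C]].
    apply (cnlf_ok _ _ _ gamma A B Hg C).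
  - intros theta Hth r phi1 phi2 Hr _ _. cbv zeta.
    destruct (symb_facts d11 d12 d21 d22 gamma r phi1 phi2 Hpsd Hg Hd Hr) as [A [B C]].
    assert (Hq : 0 < sqrt 3) by (apply sqrt_lt_R0; lra).
    assert (Hq2 := sqrt_sqrt 3 ltac:(lra)).
    assert (E : 2 / sqrt 3 = 2 * sqrt 3 / 3) by (field_simplify_eq; [|lra]; rewrite pow2_sqrt by lra; ring).
    assert (H1 : 1/2 <= theta) by (eapply Rle_trans; [apply Rmax_l|exact Hth]).
    assert (H2 : (gamma + 1) / (2 + 2 / sqrt 3) <= theta) by (eapply Rle_trans; [apply Rmax_r|exact Hth]).
    rewrite E in H2.
    assert (Hden : 0 < 2 + 2 * sqrt 3 / 3) by lra.
    apply (bdf_ok _ _ _ gamma theta A B Hg C H1).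
    apply Rmult_le_reg_r with (/ (2 + 2 * sqrt 3 / 3)); [apply Rinv_0_lt_compat; lra|].
    replace (theta * (2 + 2 * sqrt 3 / 3) * / (2 + 2 * sqrt 3 / 3)) with theta by (field; lra).
    unfold Rdiv in H2. lra.
  - intros theta Hth r phi1 phi2 Hr _ _. cbv zeta.
    destruct (symb_facts d11 d12 d21 d22 gamma r phi1 phi2 Hpsd Hg Hd Hr) as [A [B C]].
    assert (H1 : 1/2 <= theta) by (eapply Rle_trans; [apply Rmax_l|exact Hth]).
    assert (H2 : (gamma + 1) / 3 <= theta) by (eapply Rle_trans; [apply Rmax_r|exact Hth]).
    apply (adams_ok _ _ _ gamma theta A B Hg C H1). lra.
Qed.
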